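(* Let $W$ be an affine Weyl group, $w\in W$, $i\in D_R(w)$, and let $r_1,\dots,r_n$ be reflections with $H_{r_t}=H_{\alpha,c+t}$ for some root $\alpha$ and $c\in\mathbb{Z}$, such that for all $1\le t\le n$, $$\ell(r_t\cdots r_1ws_i)>\ell(r_{t-1}\cdots r_1ws_i)\quad\text{and}\quad r_t\cdots r_1ws_i\neq r_{t-1}\cdots r_1w.$$ Then $r_{n-1}\cdots r_1w\in H^{\mathbf 1}_{r_n}$, i.e. $\ell(r_nr_{n-1}\cdots r_1w)>\ell(r_{n-1}\cdots r_1w)$.
   Context: $W$ is the affine Weyl group of a crystallographic root system $\Phi$, a Coxeter group with simple generators $s_i$; $H_{\beta,k}=\{v:\langle v,\beta\rangle=k\}$ and reflections of $W$ are the reflections in these hyperplanes; $H_r$ is the hyperplane of reflection $r$. Elements are identified with alcoves. $\ell$ is length, $D_R(w)=\{i:\ell(ws_i)<\ell(w)\}$. For a reflection $r$, $H^{\mathbf 1}_r=\{y:\ell(ry)>\ell(y)\}$. *)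

(* Defs.v *)
From HB Require Import structures.
From mathcomp Require Import all_boot all_order all_algebra.
From mathcomp Require Import boolp reals.
From Stdlib Require List.
Set Implicit Arguments. Unset Strict Implicit. Unset Printing Implicit Defensive.
Import Order.TTheory GRing.Theory Num.Theory.
Local Open Scope ring_scope.

Section AffineWeyl.
Variables (R : realType) (d : nat).
Implicit Types (u v beta : 'rV[R]_d).

Definition dot u v : R := \sum_(i < d) u 0 i * v 0 i.

Definition refl beta (k : R) : 'rV[R]_d -> 'rV[R]_d :=
  fun v => v - ((dot v beta - k) * 2 / dot beta beta) *: beta.

Definition root_system (Phi : seq 'rV[R]_d) : Prop :=
  [/\ 0 \notin Phi,
      (forall v, exists c : 'I_(size Phi) -> R,
           v = \sum_(i < size Phi) c i *: Phi`_i),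
      (forall a b, a \in Phi -> b \in Phi -> refl a 0 b \in Phi),
      (forall a b, a \in Phi -> b \in Phi ->
           exists m : int, 2 * dot a b / dot a a = m%:~R) &
      (forall a (c : R), a \in Phi -> c *: a \in Phi -> c = 1 \/ c = -1)].

Definition regular (Phi : seq 'rV[R]_d) z := forall b, b \in Phi -> dot b z != 0.
Definition pos_root (Phi : seq 'rV[R]_d) z b := b \in Phi /\ 0 < dot b z.

Definition simple_root (Phi : seq 'rV[R]_d) z a :=
  pos_root Phi z a /\
  ~ (exists b c, pos_root Phi z b /\ pos_root Phi z c /\ a = b + c).

(* Highest roots (one per irreducible component): roots maximal for the
   dominance order (g >= t iff g - t is a sum of positive roots). *)
Definition highest_root (Phi : seq 'rV[R]_d) z t :=
  t \in Phi /\
  ~ (exists g (l : seq 'rV[R]_d), g \in Phi /\ l <> [::] /\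
       (forall b, List.In b l -> pos_root Phi z b) /\ g - t = \sum_(b <- l) b).

(* Simple generators: reflections in the walls of the fundamental alcove
   A_0 = {v | 0 < <v,b> < 1 for all positive roots b}. *)
Definition simple_refl (Phi : seq 'rV[R]_d) z (s : 'rV[R]_d -> 'rV[R]_d) :=
  (exists a, simple_root Phi z a /\ s = refl a 0) \/
  (exists t, highest_root Phi z t /\ s = refl t 1).

Definition wprod (l : seq ('rV[R]_d -> 'rV[R]_d)) : 'rV[R]_d -> 'rV[R]_d :=
  foldr (fun f g => f \o g) id l.

Definition aff_reflection (Phi : seq 'rV[R]_d) (f : 'rV[R]_d -> 'rV[R]_d) :=
  exists beta (k : int), beta \in Phi /\ f = refl beta k%:~R.
Definition in_W (Phi : seq 'rV[R]_d) (w : 'rV[R]_d -> 'rV[R]_d) :=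
  exists l, (forall f, List.In f l -> aff_reflection Phi f) /\ w = wprod l.

Definition has_word_len (Phi : seq 'rV[R]_d) z w (k : nat) : bool :=
  `[< exists l, size l = k /\ (forall s, List.In s l -> simple_refl Phi z s)
                /\ w = wprod l >].
Definition len (Phi : seq 'rV[R]_d) z w : nat :=
  match pselect (exists k, has_word_len Phi z w k) with
  | left P => ex_minn P
  | right _ => 0%N
  end.

End AffineWeyl.

Fixpoint rprod (T : Type) (r : nat -> T -> T) (t : nat) : T -> T :=
  match t with 0 => id | t'.+1 => r t'.+1 \o rprod r t' end.

(* Main.v *)
Require Import Defs.
From HB Require Import structures.
From mathcomp Require Import all_boot all_order all_algebra.
From mathcomp Require Import boolp reals.
From mathcomp Require Import ring lra zify.
Import Order.TTheory GRing.Theory Num.Theory.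
Set Implicit Arguments. Unset Strict Implicit. Unset Printing Implicit Defensive.
Local Open Scope ring_scope.

Ltac vring := apply/matrixP => ? ?; rewrite !mxE; ring.

Section Dot.
Variables (R : realType) (d : nat).
Implicit Types (u v w beta gamma : 'rV[R]_d).

Lemma dotC u v : dot u v = dot v u.
Proof. by apply: eq_bigr => i _; rewrite mulrC. Qed.

Lemma dotDl u v w : dot (u + v) w = dot u w + dot v w.
Proof. by rewrite /dot -big_split; apply: eq_bigr => i _; rewrite mxE mulrDl. Qed.

Lemma dotZl (a : R) u w : dot (a *: u) w = a * dot u w.
Proof. by rewrite /dot mulr_sumr; apply: eq_bigr => i _; rewrite mxE mulrA. Qed.

Lemma dotNl u w : dot (- u) w = - dot u w.
Proof. by rewrite -scaleN1r dotZl mulN1r. Qed.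

Lemma dotBl u v w : dot (u - v) w = dot u w - dot v w.
Proof. by rewrite dotDl dotNl. Qed.

Lemma dotDr u v w : dot w (u + v) = dot w u + dot w v.
Proof. by rewrite dotC dotDl !(dotC w). Qed.
Lemma dotZr (a : R) u w : dot w (a *: u) = a * dot w u.
Proof. by rewrite dotC dotZl dotC. Qed.
Lemma dotNr u w : dot w (- u) = - dot w u.
Proof. by rewrite dotC dotNl dotC. Qed.
Lemma dotBr u v w : dot w (u - v) = dot w u - dot w v.
Proof. by rewrite dotDr dotNr. Qed.

Lemma dot_ge0 u : 0 <= dot u u.
Proof. by apply: sumr_ge0 => i _; rewrite -expr2 sqr_ge0. Qed.

Lemma dot_eq0 u : dot u u = 0 -> u = 0.
Proof.
move=> h; apply/matrixP => i j; rewrite mxE (ord1 i).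
have H := @psumr_eq0P _ _ xpredT (fun k => u 0 k ^+ 2) (fun k _ => sqr_ge0 _).
have S : \sum_k u 0 k ^+ 2 = 0.
  rewrite -[RHS]h /dot; apply: eq_bigr => k _; by rewrite expr2.
have := H S j isT.
by move/eqP; rewrite sqrf_eq0 => /eqP.
Qed.

Lemma dot_gt0 u : u != 0 -> 0 < dot u u.
Proof.
move=> h; rewrite lt_neqAle dot_ge0 andbT eq_sym; apply/eqP => /dot_eq0 E.
by rewrite E eqxx in h.
Qed.

End Dot.


Section Refl.
Variables (R : realType) (d : nat).
Implicit Types (u v w b g : 'rV[R]_d).

Definition cf g b : R := 2 * dot g b / dot g g.

Lemma refl_dot_self b (k : R) v : dot b b != 0 ->
  dot (refl b k v) b - k = - (dot v b - k).
Proof. by move=> hb; rewrite /refl dotBl dotZl; field. Qed.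

Lemma refl_invol b (k : R) v : dot b b != 0 -> refl b k (refl b k v) = v.
Proof.
move=> hb; rewrite {1}/refl.
have -> : dot (refl b k v) b = k - (dot v b - k) by rewrite -refl_dot_self // addrC subrK.
rewrite /refl; apply/matrixP => i j; rewrite !mxE; field.
by [].
Qed.

Lemma refl_opp b (k : R) v : refl (- b) (- k) v = refl b k v.
Proof.
rewrite /refl dotNr dotNl dotNr opprK; apply/matrixP => i j; rewrite !mxE.
rewrite !opprK; case: (eqVneq (dot b b) 0) => hb; first by rewrite hb !invr0 !mulr0 !mul0r.
field. by [].
Qed.

Lemma dot_refl g (m : R) v b : dot g g != 0 ->
  dot (refl g m v) b = dot v (refl g 0 b) + m * cf g b.
Proof.
move=> hg; rewrite /refl /cf dotBl dotBr dotZl dotZr subr0 (dotC b g) (dotC v g).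
field. done.
Qed.

Lemma dot_refl0 g b : dot g g != 0 -> dot (refl g 0 b) (refl g 0 b) = dot b b.
Proof.
move=> hg; rewrite /refl subr0 !dotBl !dotBr !dotZl !dotZr (dotC b g).
field. done.
Qed.

Lemma refl_conj g (m : R) b (k : R) v : dot g g != 0 -> dot b b != 0 ->
  refl b k (refl g m v) = refl g m (refl (refl g 0 b) (k - m * cf g b) v).
Proof.
move=> hg hb.
set b1 := refl g 0 b.
have hb1 : dot b1 b1 = dot b b by apply: dot_refl0.
have eb1 : b1 = b - cf g b *: g by rewrite /b1 /refl /cf subr0 (dotC b g) [dot g b * 2]mulrC.
have hdb1 : forall u, dot u b1 = dot u b - cf g b * dot u g.
  by move=> u; rewrite eb1 dotBr dotZr.
rewrite /refl -/b1.
clearbody b1.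
rewrite hb1 !(dotBl, dotZl) !hdb1 eb1 dotBl dotZl (dotC b g).
apply/matrixP => i j; rewrite !mxE /cf (dotC v g).
field. by rewrite hg hb.
Qed.

End Refl.



Section Roots.
Variables (R : realType) (d : nat) (Phi : seq 'rV[R]_d) (z : 'rV[R]_d).
Hypothesis RS : root_system Phi.
Hypothesis REG : regular Phi z.
Implicit Types (a b g : 'rV[R]_d).

Lemma root_neq0 a : a \in Phi -> a != 0.
Proof. by case: RS => h0 _ _ _ _ ha; apply/eqP => E; rewrite -E ha in h0. Qed.

Lemma root_dot_gt0 a : a \in Phi -> 0 < dot a a.
Proof. by move=> /root_neq0; apply: dot_gt0. Qed.

Lemma root_dot_neq0 a : a \in Phi -> dot a a != 0.
Proof. by move=> /root_dot_gt0 h; rewrite gt_eqF. Qed.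

Lemma refl0_root a b : a \in Phi -> b \in Phi -> refl a 0 b \in Phi.
Proof. by case: RS => _ _ h _ _; apply: h. Qed.

Lemma refl_self a : a \in Phi -> refl a 0 a = - a.
Proof.
move=> ha; have h := root_dot_neq0 ha.
rewrite /refl subr0; apply/matrixP => i j; rewrite !mxE; field; done.
Qed.

Lemma root_opp a : a \in Phi -> - a \in Phi.
Proof. by move=> ha; rewrite -refl_self // refl0_root. Qed.

Lemma root_cf a b : a \in Phi -> b \in Phi -> exists m : int, cf a b = m%:~R.
Proof. by case: RS => _ _ _ h _; apply: h. Qed.

Lemma root_red a (c : R) : a \in Phi -> c *: a \in Phi -> c = 1 \/ c = -1.
Proof. by case: RS => _ _ _ _ h; apply: h. Qed.

Lemma refl0_cf a b : refl a 0 b = b - cf a b *: a.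
Proof. by rewrite /refl /cf subr0 (dotC b a) [dot a b * 2]mulrC. Qed.

Lemma refl0_opp a b : refl a 0 (- b) = - refl a 0 b.
Proof. by rewrite !refl0_cf /cf dotNr; vring. Qed.

Lemma cs_strict a b : a \in Phi -> b \in Phi -> a != b -> a != - b ->
  dot a b ^+ 2 < dot a a * dot b b.
Proof.
move=> ha hb hab hab'.
have ga := root_dot_gt0 ha; have gb := root_dot_gt0 hb.
rewrite ltNge; apply/negP => H.
set t := dot a b / dot a a.
have E : dot (b - t *: a) (b - t *: a) = dot b b - dot a b ^+ 2 / dot a a.
  rewrite !(dotBl, dotBr, dotZl, dotZr) (dotC b a) /t; field; by rewrite gt_eqF.
have : dot (b - t *: a) (b - t *: a) <= 0.
  rewrite E subr_le0 ler_pdivlMr //; by rewrite mulrC.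
move=> H2; have H3 : dot (b - t *: a) (b - t *: a) = 0.
  by apply/eqP; rewrite eq_le H2 dot_ge0.
move/dot_eq0: H3 => /eqP; rewrite subr_eq0 => /eqP Eb.
have : t *: a \in Phi by rewrite -Eb.
case/(root_red ha) => Et; rewrite Et in Eb.
  by rewrite Eb scale1r eqxx in hab.
by rewrite Eb scaleN1r opprK eqxx in hab'.
Qed.

Lemma int_cast (m : int) : exists m', m = m'.
Proof. by exists m. Qed.

Lemma cf_prod a b : a \in Phi -> b \in Phi -> a != b -> a != - b ->
  cf a b * cf b a < 4.
Proof.
move=> ha hb h1 h2; have := cs_strict ha hb h1 h2.
have ga := root_dot_gt0 ha; have gb := root_dot_gt0 hb.
rewrite /cf (dotC b a) => H.
have -> : 2 * dot a b / dot a a * (2 * dot a b / dot b b) =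
   4 * (dot a b ^+ 2 / (dot a a * dot b b)) by field; rewrite !gt_eqF.
rewrite -[X in _ < X]mulr1 ltr_pM2l //.
by rewrite ltr_pdivrMr ?mul1r // mulr_gt0.
Qed.

Lemma root_diff a b : a \in Phi -> b \in Phi -> 0 < dot a b -> a != b ->
  a - b \in Phi.
Proof.
move=> ha hb hp hab.
have hab' : a != - b.
  apply/eqP => E; move: hp; rewrite E dotNl oppr_gt0 ltNge.
  by rewrite dot_ge0.
have ga := root_dot_gt0 ha; have gb := root_dot_gt0 hb.
have [m1 E1] := root_cf hb ha; have [m2 E2] := root_cf ha hb.
have P := cf_prod ha hb hab hab'.
rewrite E2 E1 -intrM (_ : 4 = 4%:~R) // ltr_int in P.
have p1 : 0 < m1.
  by rewrite -(ltr_int R) -E1 /cf (dotC b a) divr_gt0 // mulr_gt0.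
have p2 : 0 < m2.
  by rewrite -(ltr_int R) -E2 /cf divr_gt0 // mulr_gt0.
have : m1 = 1 \/ m2 = 1 by lia.
case=> [e|e].
  have <- : refl b 0 a = a - b by rewrite refl0_cf E1 e scale1r.
  by apply: refl0_root.
have : refl a 0 b = b - a by rewrite refl0_cf E2 e scale1r.
move=> e'; have := root_opp (refl0_root ha hb); rewrite e' opprB; done.
Qed.

Definition pos b := 0 < dot b z.

Lemma root_z_neq0 b : b \in Phi -> dot b z != 0.
Proof. exact: REG. Qed.

Lemma neg_pos b : b \in Phi -> ~ pos b -> pos (- b).
Proof.
move=> hb; rewrite /pos dotNl oppr_gt0 => h.
by rewrite lt_neqAle root_z_neq0 //= leNgt; apply/negP.
Qed.

End Roots.



Section Simple.
Variables (R : realType) (d : nat) (Phi : seq 'rV[R]_d) (z : 'rV[R]_d).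
Hypothesis RS : root_system Phi.
Hypothesis REG : regular Phi z.
Implicit Types (a b g : 'rV[R]_d).

Lemma pos_neg_root b : b \in Phi -> ~ pos z b -> pos z (- b).
Proof. by move=> hb; apply: (neg_pos REG). Qed.

Lemma not_pos_lt b : b \in Phi -> ~ pos z b -> dot b z < 0.
Proof.
move=> hb /(pos_neg_root hb); rewrite /pos dotNl oppr_gt0 //.
Qed.

Lemma simple_pos a b : simple_root Phi z a -> b \in Phi -> pos z b -> b != a ->
  pos z (refl a 0 b).
Proof.
move=> [[ha pa] ns] hb pb nba.
have nodec : forall x y, x \in Phi -> y \in Phi -> pos z x -> pos z y -> a = x + y -> False.
  by move=> x y hx hy px py e; apply: ns; exists x, y.
have ga := root_dot_gt0 RS ha.
have hr := refl0_root RS ha hb.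
have [m E] := root_cf RS ha hb.
apply: contrapT => H.
have Hn : dot (refl a 0 b) z < 0 by apply: not_pos_lt.
move: (Hn); rewrite refl0_cf E dotBl dotZl => H1.
rewrite /pos in pa pb.
have m0 : 0 < m.
  rewrite -(ltr_int R); rewrite ltNge; apply/negP => hm.
  have : (m%:~R : R) * dot a z <= 0 by rewrite mulr_le0_ge0 // ltW.
  lra.
have dab : dot a b = m%:~R * dot a a / 2.
  by move: E; rewrite /cf => <-; field; rewrite gt_eqF.
have dpos : 0 < dot a b by rewrite dab divr_gt0 // mulr_gt0 // ltr0z.
have nab' : a != - b.
  apply/eqP => e; move: dpos; rewrite e dotNl oppr_gt0 ltNge dot_ge0 //.
have [m' E'] := root_cf RS hb ha.
have gb := root_dot_gt0 RS hb.
have m'0 : 0 < m'.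
  by rewrite -(ltr_int R) -E' /cf (dotC b a) divr_gt0 // ?mulr_gt0.
have nab : a != b by rewrite eq_sym.
have := cf_prod RS ha hb nab nab'.
rewrite E E' -intrM (_ : 4 = 4%:~R) // ltr_int => P.
have gam : b - a \in Phi by apply: root_diff => //; rewrite dotC.
have pgam : pos z (b - a).
  apply: contrapT => hg.
  apply: (nodec b (- (b - a))) => //; first exact: root_opp.
    exact: pos_neg_root.
  vring.
have mm : m = 1 \/ m = 2 \/ m = 3 by clear -m0 m'0 P; lia.
case: mm => [e|[e|e]]; rewrite e in H1 E.
- move: pgam; rewrite /pos dotBl; lra.
- apply: (nodec (- refl a 0 b) (b - a)) => //.
  + exact: root_opp.
  + by rewrite /pos dotNl oppr_gt0.
  + rewrite refl0_cf E; vring.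
- have hga : 0 < dot (b - a) a.
    rewrite dotBl (dotC b a) dab e; lra.
  have nga : b - a != a.
    apply/eqP => e2.
    have eb : b = (b - a) + a by vring.
    rewrite e2 in eb.
    have e22 : 2 *: a = b by rewrite eb; vring.
    have : 2 *: a \in Phi by rewrite e22.
    case/(root_red RS ha) => e3; lra.
  have g2 := root_diff RS gam ha hga nga.
  case: (pselect (pos z (b - a - a))) => pg2.
    apply: (nodec (- refl a 0 b) (b - a - a)) => //.
    + exact: root_opp.
    + by rewrite /pos dotNl oppr_gt0.
    + rewrite refl0_cf E; vring.
  apply: (nodec (- (b - a - a)) (b - a)) => //.
  + exact: root_opp.
  + exact: pos_neg_root.
  + vring.
Qed.

Lemma high_pos t : highest_root Phi z t -> pos z t.
Proof.
move=> [ht nh]; apply: contrapT => h.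
have pt := pos_neg_root ht h.
apply: nh; exists (- t), [:: - t; - t]; split; first exact: root_opp.
split => //; split.
  by move=> b /= [<-|[<-|[]]]; split => //; exact: root_opp.
by rewrite !big_cons big_nil; vring.
Qed.

Lemma high_ge0 t b : highest_root Phi z t -> b \in Phi -> pos z b -> 0 <= dot t b.
Proof.
move=> [ht nh] hb pb; rewrite leNgt; apply/negP => hn.
have pt := high_pos (conj ht nh).
have h1 : 0 < dot t (- b) by rewrite dotNr oppr_gt0.
have h2 : t != - b.
  apply/eqP => e; move: pt pb; rewrite /pos e dotNl oppr_gt0 => p1 p2.
  by move: (lt_trans p1 p2); rewrite ltxx.
have H := root_diff RS ht (root_opp RS hb) h1 h2.
apply: nh; exists (t - - b), [:: b]; split => //.
split => //; split; first by move=> x /= [<-|[]].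
by rewrite big_cons big_nil; vring.
Qed.

Lemma high_diff t b : highest_root Phi z t -> b \in Phi -> pos z b -> b != t ->
  0 < dot t b -> t - b \in Phi /\ pos z (t - b).
Proof.
move=> [ht nh] hb pb nbt hp.
have hd : t - b \in Phi by apply: root_diff => //; rewrite eq_sym.
split => //; apply: contrapT => hn.
apply: nh; exists b, [:: - (t - b)]; split => //.
split => //; split.
  by move=> x /= [<-|[]]; split; [exact: root_opp| exact: pos_neg_root].
by rewrite big_cons big_nil; vring.
Qed.

Lemma high_cf t b : highest_root Phi z t -> b \in Phi -> pos z b -> b != t ->
  cf t b = 0 \/ cf t b = 1.
Proof.
move=> H hb pb nbt.
have [ht nh] := H.
have ge := high_ge0 H hb pb.
have gt := root_dot_gt0 RS ht; have gb := root_dot_gt0 RS hb.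
have [m E] := root_cf RS ht hb.
have m0 : 0 <= m.
  by rewrite -(ler_int R) -E /cf divr_ge0 // ?mulr_ge0 // ltW.
have [m1|m1] : m = 0 \/ (0 < m) by clear -m0; lia.
  by left; rewrite E m1.
have dab : dot t b = m%:~R * dot t t / 2.
  by move: E; rewrite /cf => <-; field; rewrite gt_eqF.
have dpos : 0 < dot t b by rewrite dab divr_gt0 // mulr_gt0 // ltr0z.
have [m' E'] := root_cf RS hb ht.
have m'0 : 0 < m'.
  by rewrite -(ltr_int R) -E' /cf (dotC b t) divr_gt0 // ?mulr_gt0.
have ntb' : t != - b.
  apply/eqP => e; move: dpos; rewrite e dotNl oppr_gt0 ltNge dot_ge0 //.
have ntb : t != b by rewrite eq_sym.
have := cf_prod RS ht hb ntb ntb'.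
rewrite E E' -intrM (_ : 4 = 4%:~R) // ltr_int => P.
have [hd pd] := high_diff H hb pb nbt dpos.
have hr := root_opp RS (refl0_root RS ht hb).
have mm : m = 1 \/ m = 2 \/ m = 3 by clear -m1 m'0 P; lia.
case: mm => [e|[e|e]]; first by right; rewrite e.
- exfalso; apply: nh; exists (- refl t 0 b), [:: t - b]; split => //.
  split => //; split; first by move=> x /= [<-|[]].
  by rewrite big_cons big_nil refl0_cf E e; vring.
- exfalso; apply: nh; exists (- refl t 0 b), [:: t - b; t]; split => //.
  split => //; split.
    by move=> x /= [<-|[<-|[]]] //; split => //; apply: high_pos.
  by rewrite !big_cons big_nil refl0_cf E e; vring.
Qed.

End Simple.



Lemma sep_bounds (R : realType) (x y lo hi : R) (k : int) :
  (x - k%:~R) * (y - k%:~R) < 0 -> lo < x -> lo < y -> x < hi -> y < hi ->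
  lo < k%:~R < hi.
Proof.
move=> H h1 h2 h3 h4; apply/andP; split.
  rewrite ltNge; apply/negP => hk.
  have : 0 < (x - k%:~R) * (y - k%:~R) by apply: mulr_gt0; lra.
  lra.
rewrite ltNge; apply/negP => hk.
have : 0 < (x - k%:~R) * (y - k%:~R).
  rewrite -mulrNN; apply: mulr_gt0; lra.
lra.
Qed.

Lemma intR_lt (R : realType) (a b : int) : (a%:~R : R) < b%:~R -> a < b.
Proof. by rewrite ltr_int. Qed.
Lemma int_m11 (R : realType) (k : int) : (-1 : R) < k%:~R -> (k%:~R : R) < 1 -> k = 0.
Proof.
move=> h1 h2.
have a1 : -1 < k by apply: (@intR_lt R); rewrite (_ : ((-1)%:~R : R) = -1) //.
have a2 : k < 1 by apply: (@intR_lt R).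
lia.
Qed.
Lemma int_02 (R : realType) (k : int) : (0 : R) < k%:~R -> (k%:~R : R) < 2 -> k = 1.
Proof.
move=> h1 h2.
have a1 : 0 < k by apply: (@intR_lt R).
have a2 : k < 2 by apply: (@intR_lt R).
lia.
Qed.
Lemma int_01 (R : realType) (k : int) : (0 : R) < k%:~R -> (k%:~R : R) < 1 -> False.
Proof.
move=> h1 h2.
have a1 : 0 < k by apply: (@intR_lt R).
have a2 : k < 1 by apply: (@intR_lt R).
lia.
Qed.

Section Point.
Variables (R : realType) (d : nat) (Phi : seq 'rV[R]_d) (z : 'rV[R]_d).
Hypothesis RS : root_system Phi.
Hypothesis REG : regular Phi z.
Implicit Types (a b g : 'rV[R]_d).

Definition Msum := \sum_(x <- Phi) `|dot x z|.
Definition eps : R := (1 + Msum)^-1.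
Definition pt : 'rV[R]_d := eps *: z.

Lemma Msum_ge b : b \in Phi -> `|dot b z| <= Msum.
Proof.
rewrite /Msum; elim: Phi => [|x l IH] //.
rewrite in_cons big_cons => /orP [/eqP ->|h].
  by rewrite lerDl sumr_ge0.
by rewrite (le_trans (IH h)) // lerDr.
Qed.

Lemma Msum_ge0 : 0 <= Msum.
Proof. by rewrite /Msum sumr_ge0. Qed.

Lemma eps_gt0 : 0 < eps.
Proof. by rewrite /eps invr_gt0; have := Msum_ge0; lra. Qed.

Lemma dot_pt b : dot pt b = eps * dot b z.
Proof. by rewrite /pt dotZl dotC. Qed.

Lemma pt_small b : b \in Phi -> `|dot pt b| < 1.
Proof.
move=> hb; rewrite dot_pt normrM gtr0_norm ?eps_gt0 //.
have h := Msum_ge hb; have h0 := Msum_ge0.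
rewrite /eps ltr_pdivrMl; last lra.
lra.
Qed.

Lemma pt_pos b : b \in Phi -> pos z b -> 0 < dot pt b < 1.
Proof.
move=> hb pb; have := pt_small hb; rewrite dot_pt => h.
have e := eps_gt0.
have p : 0 < eps * dot b z by rewrite mulr_gt0.
rewrite p /=; move: h; rewrite gtr0_norm //.
Qed.

Lemma pt_neg b : b \in Phi -> ~ pos z b -> -1 < dot pt b < 0.
Proof.
move=> hb pb; have := pt_small hb; rewrite dot_pt => h.
have e := eps_gt0.
have n := not_pos_lt REG hb pb.
have p : eps * dot b z < 0 by rewrite pmulr_rlt0.
rewrite p andbT; move: h; rewrite ltr0_norm // ltrNl //.
Qed.

Lemma pt_range b : b \in Phi -> -1 < dot pt b < 1 /\ dot pt b != 0.
Proof.
move=> hb; case: (pselect (pos z b)) => h.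
  by have /andP[h1 h2] := pt_pos hb h; split; [apply/andP; split => //; lra | rewrite gt_eqF].
by have /andP[h1 h2] := pt_neg hb h; split; [apply/andP; split => //; lra | rewrite lt_eqF].
Qed.

Definition sep b (k : int) u v := (dot u b - k%:~R) * (dot v b - k%:~R) < 0.

Lemma sep_opp b k u v : sep (- b) (- k) u v = sep b k u v.
Proof.
by rewrite /sep !dotNr mulrNz -!opprD mulrNN.
Qed.

Lemma OH_simple a b k : simple_root Phi z a -> b \in Phi ->
  sep b k pt (refl a 0 pt) -> forall v, refl b k%:~R v = refl a 0 v.
Proof.
move=> sa hb.
have ha : a \in Phi by case: sa => [[]].
have hb' := refl0_root RS ha hb.
rewrite /sep dot_refl; last by have := root_dot_neq0 RS ha.
rewrite mul0r addr0 => H.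
have [/andP [x1 x2] x3] := pt_range hb.
have [/andP [y1 y2] y3] := pt_range hb'.
have /andP [k1 k2] := sep_bounds H x1 y1 x2 y2.
have k0 : k = 0 by apply: (int_m11 k1 k2).
rewrite k0 !subr0 in H.
move=> v; rewrite k0.
case: (pselect (pos z b)) => pb.
  have [e|ne] := eqVneq b a; first by rewrite e.
  have := simple_pos RS REG sa hb pb ne.
  move/(pt_pos hb') => /andP [h _].
  have /andP [h' _] := pt_pos hb pb.
  by move: H; rewrite ltNge mulr_ge0 // ltW.
have pnb := pos_neg_root REG hb pb.
have hnb := root_opp RS hb.
have [e|ne] := eqVneq (- b) a.
  by rewrite -e; have := refl_opp b 0 v; rewrite oppr0 => ->; rewrite mulr0z.
have := simple_pos RS REG sa hnb pnb ne.
rewrite refl0_opp => /(pt_pos (root_opp RS hb')) /andP [h _].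
have /andP [_ h'] := pt_neg hb pb.
move: h; rewrite dotNr oppr_gt0 => h.
by move: H; rewrite ltNge -mulrNN mulr_ge0 // oppr_ge0 ltW.
Qed.

Lemma OH_high_pos t b k : highest_root Phi z t -> b \in Phi -> pos z b ->
  sep b k pt (refl t 1 pt) -> forall v, refl b k%:~R v = refl t 1 v.
Proof.
move=> H hb pb.
have ht : t \in Phi by case: H.
have gt := root_dot_gt0 RS ht.
rewrite /sep dot_refl; last by have := root_dot_neq0 RS ht.
rewrite mul1r => S.
have /andP [x1 x2] := pt_pos hb pb.
have [e|ne] := eqVneq b t.
  rewrite e in S x1 x2 *.
  have c2 : cf t t = 2 by rewrite /cf; field; rewrite gt_eqF.
  rewrite (refl_self RS ht) dotNr c2 in S.
  have y1 : 0 < - dot pt t + 2 by lra.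
  have y2 : - dot pt t + 2 < 2 by lra.
  have x2' : dot pt t < 2 by lra.
  have /andP [k1 k2] := sep_bounds S x1 y1 x2' y2.
  have k0 : k = 1 by apply: (int_02 k1 k2).
  by move=> v; rewrite k0.
case: (high_cf RS REG H hb pb ne) => C.
  have : refl t 0 b = b by rewrite refl0_cf C scale0r subr0.
  move=> E; rewrite E C addr0 in S.
  by have := sqr_ge0 (dot pt b - k%:~R); rewrite expr2; lra.
have dp : 0 < dot t b.
  have e2 : dot t b = cf t b * dot t t / 2 by rewrite /cf; field; rewrite gt_eqF.
  by rewrite e2 C mul1r divr_gt0.
have [hd pd] := high_diff RS REG H hb pb ne dp.
have /andP [z1 z2] := pt_pos hd pd.
rewrite refl0_cf C scale1r dotBr in S.
rewrite dotBr in z1 z2.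
have y1 : 0 < dot pt b - dot pt t + 1 by lra.
have y2 : dot pt b - dot pt t + 1 < 1 by lra.
have /andP [k1 k2] := sep_bounds S x1 y1 x2 y2.
by case: (int_01 k1 k2).
Qed.

Lemma OH s b k : simple_refl Phi z s -> b \in Phi ->
  sep b k pt (s pt) -> forall v, refl b k%:~R v = s v.
Proof.
case=> [[a [sa ->]]|[t [ht ->]]] hb.
  exact: OH_simple.
case: (pselect (pos z b)) => pb; first exact: OH_high_pos.
rewrite -sep_opp => S v.
have := OH_high_pos ht (root_opp RS hb) (neg_pos REG hb pb) S v.
by rewrite mulrNz refl_opp.
Qed.

End Point.


Lemma sign1 (R : realType) (A B C : R) : A != 0 -> B != 0 -> A * C < 0 -> ~ (A * B < 0) -> B * C < 0.
Proof.
move=> hA hB h1 h2.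
have h3 : 0 < A * B.
  rewrite lt_neqAle eq_sym mulf_neq0 //= leNgt; exact/negP.
have : (A * B) * (B * C) < 0.
  have -> : (A * B) * (B * C) = (B * B) * (A * C) by ring.
  by rewrite pmulr_rlt0 // lt_neqAle eq_sym mulf_neq0 //= -expr2 sqr_ge0.
by rewrite pmulr_rlt0.
Qed.
Lemma sign2 (R : realType) (A B C : R) : A != 0 -> B != 0 -> C != 0 -> ~ (A * B < 0) -> ~ (B * C < 0) -> 0 < A * C.
Proof.
move=> hA hB hC h1 h2.
rewrite lt_neqAle eq_sym mulf_neq0 //= leNgt; apply/negP => h.
by apply: h2; exact: (sign1 hA hB h h1).
Qed.


Section Main.
Variables (R : realType) (d : nat) (Phi : seq 'rV[R]_d) (z : 'rV[R]_d).
Hypothesis RS : root_system Phi.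
Hypothesis REG : regular Phi z.
Implicit Types (a b g : 'rV[R]_d).

Definition allaff (u : seq ('rV[R]_d -> 'rV[R]_d)) :=
  forall f, List.In f u -> aff_reflection Phi f.
Definition allsimp (u : seq ('rV[R]_d -> 'rV[R]_d)) :=
  forall f, List.In f u -> simple_refl Phi z f.

Lemma wprod_cons (f : 'rV[R]_d -> 'rV[R]_d) l v : wprod (f :: l) v = f (wprod l v).
Proof. by []. Qed.

Lemma wprod_cat (l1 l2 : seq ('rV[R]_d -> 'rV[R]_d)) v :
  wprod (l1 ++ l2) v = wprod l1 (wprod l2 v).
Proof. by elim: l1 => //= f l IH; rewrite IH. Qed.

Lemma allaff_cat u1 u2 : allaff u1 -> allaff u2 -> allaff (u1 ++ u2).
Proof.
move=> h1 h2 f; rewrite List.in_app_iff; case; [exact: h1|exact: h2].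
Qed.

Lemma simple_aff s : simple_refl Phi z s -> aff_reflection Phi s.
Proof.
case=> [[a [[[ha _] _] ->]]|[t [[ht _] ->]]].
  by exists a, 0; split => //; rewrite mulr0z.
by exists t, 1; split => //; rewrite mulr1z.
Qed.

Lemma simple_root_in s : simple_refl Phi z s ->
  exists a (k : R), a \in Phi /\ s = refl a k.
Proof.
case=> [[a [[[ha _] _] ->]]|[t [[ht _] ->]]]; first by exists a, 0.
by exists t, 1.
Qed.

Lemma simple_invol s v : simple_refl Phi z s -> s (s v) = v.
Proof.
move/simple_root_in => [a [k [ha ->]]].
by apply: refl_invol; apply: (root_dot_neq0 RS ha).
Qed.

Lemma PB u : allaff u -> forall b (k : int), b \in Phi ->
  exists b2 (k2 : int), b2 \in Phi /\
    (forall v, dot (wprod u v) b - k%:~R = dot v b2 - k2%:~R) /\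
    (forall v, refl b k%:~R (wprod u v) = wprod u (refl b2 k2%:~R v)).
Proof.
elim: u => [|f u IH] hu b k hb.
  by exists b, k; split => //; split.
have [g [m [hg ef]]] : aff_reflection Phi f by apply: hu; left.
have hu' : allaff u by move=> x hx; apply: hu; right.
have [c C] := root_cf RS hg hb.
have hb1 := refl0_root RS hg hb.
have [b2 [k2 [hb2 [H1 H2]]]] := IH hu' _ (k - m * c) hb1.
exists b2, k2; split => //; split.
  move=> v; rewrite wprod_cons ef dot_refl; last by have := root_dot_neq0 RS hg.
  rewrite -H1 C rmorphB /= rmorphM /=; ring.
move=> v; rewrite !wprod_cons ef refl_conj; last by have := root_dot_neq0 RS hb.
  2: by have := root_dot_neq0 RS hg.
have -> : (k%:~R - m%:~R * cf g b) = ((k - m * c)%:~R : R).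
  by rewrite C rmorphB /= rmorphM.
by rewrite H2.
Qed.

Notation p := (pt Phi z).

Lemma NZ u b (k : int) : allaff u -> b \in Phi -> dot (wprod u p) b - k%:~R != 0.
Proof.
move=> hu hb.
have [b2 [k2 [hb2 [H1 _]]]] := PB hu k hb.
rewrite H1.
have [/andP [x1 x2] x3] := pt_range REG hb2.
apply/eqP => e.
have ek : dot p b2 = k2%:~R by apply/eqP; rewrite -subr_eq0 e.
rewrite ek in x1 x2 x3.
have k0 := int_m11 x1 x2.
by rewrite k0 mulr0z eqxx in x3.
Qed.

Lemma K u s b (k : int) : allaff u -> simple_refl Phi z s -> b \in Phi ->
  sep b k (wprod u p) (wprod u (s p)) ->
  forall v, refl b k%:~R (wprod u (s v)) = wprod u v.
Proof.
move=> hu hs hb S v.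
have [b2 [k2 [hb2 [H1 H2]]]] := PB hu k hb.
rewrite /sep !H1 in S.
have O := OH RS REG hs hb2 S.
by rewrite H2 O simple_invol.
Qed.

Lemma GAL b (k : int) l : b \in Phi -> allsimp l -> forall u, allaff u ->
  sep b k (wprod u p) (wprod u (wprod l p)) ->
  exists l1 s l2, l = l1 ++ s :: l2 /\ simple_refl Phi z s /\
    forall v, refl b k%:~R (wprod u (wprod l1 (s v))) = wprod u (wprod l1 v).
Proof.
move=> hb; elim: l => [|s l IH] hl u hu S.
  by move: S; rewrite /sep -expr2 ltNge sqr_ge0.
have hs : simple_refl Phi z s by apply: hl; left.
have hl' : allsimp l by move=> x hx; apply: hl; right.
case: (pselect (sep b k (wprod u p) (wprod u (s p)))) => S1.
  exists [::], s, l; split => //; split => //.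
  by move=> v; apply: (K hu hs hb S1).
have hu' : allaff (u ++ [:: s]).
  by apply: allaff_cat => // x [<-|[]]; apply: simple_aff.
have S2 : sep b k (wprod (u ++ [:: s]) p) (wprod (u ++ [:: s]) (wprod l p)).
  rewrite /sep !wprod_cat /=.
  apply: (sign1 (NZ k hu hb)).
  - by have := NZ k hu' hb; rewrite wprod_cat.
  - exact: S.
  - exact: S1.
have [l1 [s' [l2 [E [hs' H]]]]] := IH hl' _ hu' S2.
exists (s :: l1), s', l2; split; first by rewrite E.
split => // v.
by have := H v; rewrite !wprod_cat.
Qed.

Lemma len_le f l : allsimp l -> f = wprod l -> (len Phi z f <= size l)%N.
Proof.
move=> hl ef; rewrite /len; case: pselect => [P|nP] //.
case: (ex_minnP P) => m _ hmin; apply: hmin.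
by apply/asboolP; exists l.
Qed.

Lemma len_word f : (exists k, has_word_len Phi z f k) ->
  exists l, allsimp l /\ f = wprod l /\ size l = len Phi z f.
Proof.
move=> H; rewrite /len; case: pselect => [P|nP]; last by [].
case: (ex_minnP P) => m /asboolP [l [el [hl ef]]] _.
by exists l.
Qed.

Lemma len_pos f : (0 < len Phi z f)%N -> exists k, has_word_len Phi z f k.
Proof. by rewrite /len; case: pselect. Qed.

Lemma word_comp f s : (exists k, has_word_len Phi z f k) -> simple_refl Phi z s ->
  exists k, has_word_len Phi z (f \o s) k.
Proof.
move=> /len_word [l [hl [ef _]]] hs.
exists (size (l ++ [:: s])); apply/asboolP; exists (l ++ [:: s]); split => //; split.
  by move=> x; rewrite List.in_app_iff => -[h|[<-|[]]]; [apply: hl|].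
by apply: funext => v; rewrite wprod_cat ef.
Qed.

Lemma EXCH b (k : int) f : b \in Phi -> (exists k, has_word_len Phi z f k) ->
  sep b k p (f p) -> (len Phi z (refl b k%:~R \o f) < len Phi z f)%N.
Proof.
move=> hb /len_word [l [hl [ef el]]] S.
have hu : allaff [::] by [].
have S' : sep b k (wprod [::] p) (wprod [::] (wprod l p)) by rewrite -ef.
have [l1 [s [l2 [E [hs H]]]]] := GAL hb hl hu S'.
have ef2 : refl b k%:~R \o f = wprod (l1 ++ l2).
  apply: funext => v; rewrite /= ef E !wprod_cat wprod_cons.
  by have := H (wprod l2 v).
have hl2 : allsimp (l1 ++ l2).
  move=> x; rewrite List.in_app_iff => -[h|h]; apply: hl; rewrite E List.in_app_iff.
    by left.
  by right; right.
apply: (leq_ltn_trans (len_le hl2 ef2)).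
by rewrite -el E !size_cat /= addnS.
Qed.

Lemma rprod_list (r : nat -> 'rV[R]_d -> 'rV[R]_d) alpha (c : int) n :
  alpha \in Phi ->
  (forall t : nat, (1 <= t <= n)%N -> r t = refl alpha (c + t%:Z)%:~R) ->
  forall t, (t <= n)%N -> exists l, allaff l /\ forall v, rprod r t v = wprod l v.
Proof.
move=> ha hr; elim=> [|t IH] ht.
  by exists [::]; split.
have [l [hl el]] := IH (ltnW ht).
exists (r t.+1 :: l); split.
  move=> f [<-|h]; last by apply: hl.
  by exists alpha, (c + t.+1%:Z); split => //; apply: hr; rewrite ht.
by move=> v; rewrite /= -el.
Qed.

End Main.

Theorem proposition4p5 (R : realType) (d : nat) (Phi : seq 'rV[R]_d)
  (z : 'rV[R]_d) (w si : 'rV[R]_d -> 'rV[R]_d) (alpha : 'rV[R]_d) (c : int)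
  (n : nat) (r : nat -> 'rV[R]_d -> 'rV[R]_d) :
  root_system Phi -> regular Phi z ->
  in_W Phi w ->
  simple_refl Phi z si -> (len Phi z (w \o si) < len Phi z w)%N ->
  alpha \in Phi -> (1 <= n)%N ->
  (forall t : nat, (1 <= t <= n)%N -> r t = refl alpha (c + t%:Z)%:~R) ->
  (forall t : nat, (1 <= t <= n)%N ->
     (len Phi z (rprod r t.-1 \o w \o si) < len Phi z (rprod r t \o w \o si))%N /\
     rprod r t \o w \o si <> rprod r t.-1 \o w) ->
  (len Phi z (rprod r n.-1 \o w) < len Phi z (r n \o rprod r n.-1 \o w))%N.
Proof.
move=> RS REG [lw [hlw ew]] hsi hlen ha hn hr hyp.
case: n hn hr hyp => [|n'] // _ hr hyp /=.
have [hy1 hy2] := hyp n'.+1 (leqnn _).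
rewrite /= in hy1 hy2.
set k := (c + (n'.+1)%:Z).
have er : r n'.+1 = refl alpha k%:~R by apply: hr; rewrite leqnn.
have [ly [hly ey]] : exists l, allaff Phi l /\ forall v, rprod r n' (w v) = wprod l v.
  have [l [hl el]] := rprod_list ha hr (leqnSn n').
  exists (l ++ lw); split; first by apply: allaff_cat.
  by move=> v; rewrite wprod_cat -el ew.
set p := pt Phi z.
have Wys : exists k, has_word_len Phi z ((rprod r n' \o w) \o si) k.
  case: (posnP n') => [e0|npos].
    subst n'.
    apply: (word_comp _ hsi); apply: len_pos.
    by apply: (leq_ltn_trans _ hlen).
  have hn' : (0 < n' <= n'.+1)%N by rewrite npos leqnSn.
  have [h1 _] := hyp n' hn'.
  by apply: len_pos; apply: (leq_ltn_trans _ h1).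
have Wry : exists k, has_word_len Phi z (r n'.+1 \o (rprod r n' \o w)) k.
  have W0 : exists k, has_word_len Phi z (((r n'.+1 \o rprod r n') \o w) \o si) k.
    by apply: len_pos; apply: (leq_ltn_trans _ hy1).
  have := word_comp W0 hsi.
  have -> : (((r n'.+1 \o rprod r n') \o w) \o si) \o si = r n'.+1 \o (rprod r n' \o w).
    by apply: funext => v /=; rewrite (simple_invol RS _ hsi).
  done.
have nA : ~ sep alpha k p (((rprod r n' \o w) \o si) p).
  move=> S; have H := EXCH RS REG ha Wys S.
  rewrite -er in H.
  have X : (len Phi z (((r n'.+1 \o rprod r n') \o w) \o si) <
            len Phi z (((r n'.+1 \o rprod r n') \o w) \o si))%N := ltn_trans H hy1.
  by rewrite ltnn in X.
have nB : ~ sep alpha k (wprod ly p) (wprod ly (si p)).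
  move=> S; apply: hy2; apply: funext => v.
  have := K RS REG hly hsi ha S v.
  by rewrite -er -!ey.
have hA : dot p alpha - k%:~R != 0.
  have hu : allaff Phi [::] by [].
  have H0 := NZ RS REG k hu ha. exact H0.
have hB : dot (wprod ly (si p)) alpha - k%:~R != 0.
  have hu : allaff Phi (ly ++ [:: si]).
    by apply: allaff_cat => // x [<-|[]]; apply: (simple_aff hsi).
  by have := NZ RS REG k hu ha; rewrite wprod_cat.
have hC : dot (wprod ly p) alpha - k%:~R != 0 by apply: NZ.
have nA' : ~ ((dot p alpha - k%:~R) * (dot (wprod ly (si p)) alpha - k%:~R) < 0).
  by move=> h; apply: nA; rewrite /sep /= ey.
have nB' : ~ ((dot (wprod ly (si p)) alpha - k%:~R) * (dot (wprod ly p) alpha - k%:~R) < 0).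
  by move=> h; apply: nB; rewrite /sep mulrC.
have AC := sign2 hA hB hC nA' nB'.
have S : sep alpha k p ((r n'.+1 \o (rprod r n' \o w)) p).
  rewrite /sep /= ey er refl_dot_self; last by have := root_dot_neq0 RS ha.
  by rewrite mulrN oppr_lt0.
have H := EXCH RS REG ha Wry S.
rewrite -er in H.
have E : r n'.+1 \o (r n'.+1 \o (rprod r n' \o w)) = rprod r n' \o w.
  apply: funext => v /=; rewrite er refl_invol //.
  by have := root_dot_neq0 RS ha.
rewrite E in H.
exact: H.
Qed.
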